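(* Fix constants $\gamma\in(0,1]$, $c_1>0$ and $K\ge1$. There exist constants $L_0$ and $K'$ depending only on $\gamma,c_1,K$ such that the following holds for every $L\ge L_0$. Let $d_0,\dots,d_L$ be positive integers and let $A_i(0),A_i\in\mathbb{R}^{d_i\times d_{i-1}}$ ($i\in[L]$) be matrices; write $A_{j:i}=A_j\cdots A_i$ and $A_{j:i}(0)=A_j(0)\cdots A_i(0)$ for $1\le i\le j\le L$. Suppose $\|A_{j:i}(0)\|\le KL^3$ for all $1\le i\le j\le L$, $\|A_{j:i}(0)\|\le e^{-c_1L^\gamma}$ for all $1\le i\le j\le L$ with $j-i\ge L/10$, and $\|A_i-A_i(0)\|\le e^{-0.6c_1L^\gamma}$ for all $i\in[L]$. Then $$\|A_{j:i}\|\le K'L^3\quad\forall\,1\le i\le j\le L,\qquad \|A_{j:i}\|\le K'e^{-c_1L^\gamma}\quad\forall\,1\le i\le j\le L\text{ with }j-i\ge L/4.$$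
   Context: $\|\cdot\|$ denotes the spectral norm; $[L]=\{1,\dots,L\}$. *)

(* Defs.v *)
From mathcomp Require Import all_boot all_order all_algebra.
From mathcomp Require Import classical_sets reals sequences exp.
Set Implicit Arguments. Unset Strict Implicit. Unset Printing Implicit Defensive.
Import GRing.Theory Num.Theory.
Local Open Scope ring_scope.
Local Open Scope classical_set_scope.

Definition vnorm2 (R : realType) (n : nat) (v : 'cV[R]_n) : R :=
  Num.sqrt (\sum_(k < n) v k 0 ^+ 2).

Definition specnorm (R : realType) (m n : nat) (M : 'M[R]_(m, n)) : R :=
  sup [set r : R | exists v : 'cV[R]_n, vnorm2 v = 1 /\ r = vnorm2 (M *m v)].

(* Matrices of a depth-L network: Amat k : 'M_(d (k+1), d k) plays the role of
   the paper's A_{k+1} (0-based index shift).  The product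
   mprod Amat s n = Amat (n-1+s) *m ... *m Amat s : 'M_(d (n+s), d s).
   Hence the paper's A_{j:i} = A_j ... A_i  equals  mprod Amat (i-1) (j-i+1). *)
Fixpoint mprod (R : realType) (d : nat -> nat)
  (Amat : forall k : nat, 'M[R]_(d k.+1, d k)) (s n : nat) : 'M[R]_(d (n + s), d s) :=
  match n return 'M[R]_(d (n + s), d s) with
  | 0 => 1%:M
  | n'.+1 => Amat (n' + s) *m mprod Amat s n'
  end.

(* Main.v *)
Require Import Defs.
From mathcomp Require Import all_boot all_order all_algebra.
From mathcomp Require Import classical_sets reals sequences exp.
From mathcomp Require Import boolp.
From mathcomp.algebra_tactics Require Import ring lra.
From mathcomp Require Import zify.
Import Order.TTheory GRing.Theory Num.Theory.
Local Open Scope ring_scope.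


Section VN.
Set Implicit Arguments.
Context {R : realType}.

Lemma cs_sum n (a b : 'I_n -> R) :
  (\sum_k a k * b k) ^+ 2 <= (\sum_k a k ^+ 2) * (\sum_k b k ^+ 2).
Proof.
set S := \sum_k a k * b k; set A := \sum_k a k ^+ 2; set B := \sum_k b k ^+ 2.
have A0 : 0 <= A by apply: sumr_ge0 => k _; exact: sqr_ge0.
have B0 : 0 <= B by apply: sumr_ge0 => k _; exact: sqr_ge0.
have [Az|Anz] := eqVneq A 0.
  have ak : forall k, a k = 0.
    move=> k; apply/eqP; rewrite -sqrf_eq0; apply/eqP.
    move: Az; move/eqP; rewrite psumr_eq0; last by move=> i _; exact: sqr_ge0.
    move=> /allP Hk; have := Hk k (mem_index_enum _). by rewrite implyTb => /eqP.
  have -> : S = 0 by rewrite /S big1 // => k _; rewrite ak mul0r.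
  by rewrite expr2 mul0r mulr_ge0.
have Ap : 0 < A by rewrite lt0r Anz A0.
set t := S / A.
have H : 0 <= \sum_k (t * a k - b k) ^+ 2 by apply: sumr_ge0 => k _; exact: sqr_ge0.
have E : \sum_k (t * a k - b k) ^+ 2 = t ^+ 2 * A - 2 * t * S + B.
  rewrite /A /S /B !mulr_sumr -sumrN -!big_split /=.
  by apply: eq_bigr => k _; ring.
rewrite E /t in H.
have : 0 <= (S ^+ 2 / A - 2 * S ^+ 2 / A + B) * A by apply: mulr_ge0 => //; move: H; congr (_ <= _); field; exact: Anz.
have -> : (S ^+ 2 / A - 2 * S ^+ 2 / A + B) * A = B * A - S ^+ 2 by field.
by rewrite subr_ge0 mulrC.
Qed.

Lemma vnorm2_ge0 n (v : 'cV[R]_n) : 0 <= vnorm2 v.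
Proof. exact: sqrtr_ge0. Qed.

Lemma vnorm2_sq n (v : 'cV[R]_n) : vnorm2 v ^+ 2 = \sum_k v k 0 ^+ 2.
Proof. by rewrite /vnorm2 sqr_sqrtr //; apply: sumr_ge0 => k _; exact: sqr_ge0. Qed.

Lemma vnorm2D n (u v : 'cV[R]_n) : vnorm2 (u + v) <= vnorm2 u + vnorm2 v.
Proof.
rewrite -(ler_pXn2r (n:=2)) ?nnegrE ?addr_ge0 ?vnorm2_ge0 //.
rewrite vnorm2_sq sqrrD !vnorm2_sq.
have -> : \sum_k (u + v) k 0 ^+ 2 = \sum_k u k 0 ^+ 2 + 2 * \sum_k (u k 0 * v k 0) + \sum_k v k 0 ^+ 2.
  rewrite mulr_sumr -!big_split /=; apply: eq_bigr => k _; rewrite !mxE; ring.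
suff Hs : \sum_k u k 0 * v k 0 <= vnorm2 u * vnorm2 v by rewrite mulr2n; lra.
have := cs_sum (fun k => u k 0) (fun k => v k 0).
rewrite -!vnorm2_sq -exprMn => H.
apply: le_trans (ler_norm _) _.
move: H; rewrite -real_normK ?num_real // => H.
by rewrite -(ler_pXn2r (n:=2)) ?nnegrE ?normr_ge0 ?mulr_ge0 ?vnorm2_ge0.
Qed.

Lemma vnorm2Z n (c : R) (v : 'cV[R]_n) : vnorm2 (c *: v) = `|c| * vnorm2 v.
Proof.
rewrite /vnorm2 -sqrtr_sqr -sqrtrM ?sqr_ge0 //; congr Num.sqrt.
rewrite mulr_sumr; apply: eq_bigr => k _; rewrite !mxE; ring.
Qed.

Lemma vnorm2_0 n : vnorm2 (0 : 'cV[R]_n) = 0.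
Proof. by rewrite /vnorm2 big1 ?sqrtr0 // => k _; rewrite mxE expr2 mul0r. Qed.

Lemma vnorm2_eq0 n (v : 'cV[R]_n) : vnorm2 v = 0 -> v = 0.
Proof.
move=> /eqP; rewrite /vnorm2 sqrtr_eq0 => H.
have : \sum_k v k 0 ^+ 2 = 0.
  apply/eqP; rewrite eq_le H sumr_ge0 // => k _; exact: sqr_ge0.
move/eqP; rewrite psumr_eq0; last by move=> i _; exact: sqr_ge0.
move=> /allP Hk; apply/matrixP => i j; rewrite (ord1 j) mxE.
by have := Hk i (mem_index_enum _); rewrite implyTb sqrf_eq0 => /eqP.
Qed.


Lemma opbound m n (M : 'M[R]_(m, n)) :
  exists C, 0 <= C /\ forall v, vnorm2 (M *m v) <= C * vnorm2 v.
Proof.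
exists (Num.sqrt (\sum_i \sum_j M i j ^+ 2)); split; first exact: sqrtr_ge0.
move=> v; rewrite /vnorm2 -sqrtrM; last by apply: sumr_ge0 => i _; apply: sumr_ge0 => j _; exact: sqr_ge0.
rewrite ler_sqrt; last by apply: mulr_ge0; apply: sumr_ge0 => i _; try apply: sumr_ge0 => j _; exact: sqr_ge0.
rewrite mulr_suml; apply: ler_sum => i _; rewrite mxE.
exact: (cs_sum (fun j => M i j) (fun j => v j 0)).
Qed.

Lemma vnorm2_coef n (v : 'cV[R]_n) : vnorm2 v = 0 \/ exists2 u, vnorm2 u = 1 & v = vnorm2 v *: u.
Proof.
have [->|nz] := eqVneq (vnorm2 v) 0; first by left.
right; exists ((vnorm2 v)^-1 *: v).
  by rewrite vnorm2Z ger0_norm ?invr_ge0 ?vnorm2_ge0 // mulVf.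
by rewrite scalerA mulfV // scale1r.
Qed.

Definition snset m n (M : 'M[R]_(m, n)) :=
  [set r : R | exists v : 'cV[R]_n, vnorm2 v = 1 /\ r = vnorm2 (M *m v)]%classic.

Lemma snset_ub (m n : nat) (M : 'M[R]_(m, n)) : has_ubound (snset M).
Proof.
have [C [C0 HC]] := opbound M.
exists C; move=> r [v [v1 ->]]; by have := HC v; rewrite v1 mulr1.
Qed.

Lemma sn_ge0 m n (M : 'M[R]_(m, n)) : 0 <= specnorm M.
Proof.
change (0 <= sup (snset M)).
have [[r Hr]|E] := pselect (exists r, snset M r).
  have := ub_le_sup (snset_ub M) Hr; apply: le_trans.
  by case: Hr => v [_ ->]; exact: vnorm2_ge0.
have -> : snset M = set0%classic by apply/seteqP; split => // r Hr; apply: E; exists r.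
by rewrite sup0.
Qed.

Lemma sn_mulv m n (M : 'M[R]_(m, n)) v : vnorm2 (M *m v) <= specnorm M * vnorm2 v.
Proof.
have [H0|[u u1 ->]] := vnorm2_coef v.
  by rewrite H0 (vnorm2_eq0 _ H0) mulmx0 vnorm2_0 mulr0.
rewrite -scalemxAr vnorm2Z vnorm2Z u1 ger0_norm ?vnorm2_ge0 // mulr1 mulrC ler_wpM2r ?vnorm2_ge0 //.
by apply: (ub_le_sup (snset_ub M)); exists u.
Qed.

Lemma sn_le m n (M : 'M[R]_(m, n)) c : 0 <= c ->
  (forall v, vnorm2 (M *m v) <= c * vnorm2 v) -> specnorm M <= c.
Proof.
move=> c0 H; change (sup (snset M) <= c).
have [[r Hr]|E] := pselect (exists r, snset M r).
  apply: ge_sup; first by exists r.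
  by move=> s [v [v1 ->]]; have := H v; rewrite v1 mulr1.
have -> : snset M = set0%classic by apply/seteqP; split => // r Hr; apply: E; exists r.
by rewrite sup0.
Qed.

Lemma sn_mul m n p (M : 'M[R]_(m, n)) (N : 'M[R]_(n, p)) :
  specnorm (M *m N) <= specnorm M * specnorm N.
Proof.
apply: sn_le; first by rewrite mulr_ge0 ?sn_ge0.
move=> v; rewrite -mulmxA; apply: le_trans (sn_mulv _ _) _.
by rewrite -mulrA ler_wpM2l ?sn_ge0 ?sn_mulv.
Qed.

Lemma sn_add m n (M N : 'M[R]_(m, n)) :
  specnorm (M + N) <= specnorm M + specnorm N.
Proof.
apply: sn_le; first by rewrite addr_ge0 ?sn_ge0.
move=> v; rewrite mulmxDl; apply: le_trans (vnorm2D _ _) _.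
by rewrite mulrDl lerD ?sn_mulv.
Qed.

Lemma sn_id n : specnorm (1%:M : 'M[R]_n) <= 1.
Proof. by apply: sn_le => // v; rewrite mul1mx mul1r. Qed.

Lemma sn_0 m n : specnorm (0 : 'M[R]_(m, n)) <= 0.
Proof. by apply: sn_le => // v; rewrite mul0mx vnorm2_0 mul0r. Qed.

Lemma sn_sum m n (I : Type) (r : seq I) (F : I -> 'M[R]_(m, n)) :
  specnorm (\sum_(i <- r) F i) <= \sum_(i <- r) specnorm (F i).
Proof.
elim: r => [|x r IH]; first by rewrite !big_nil sn_0.
by rewrite !big_cons; apply: le_trans (sn_add _ _) _; rewrite lerD2l.
Qed.

Lemma sn_sub m n (M N : 'M[R]_(m, n)) :
  specnorm M <= specnorm N + specnorm (M - N).
Proof. by rewrite -{1}(addrNK N M) addrC; exact: sn_add. Qed.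

End VN.


Section GP.
Set Implicit Arguments.
Context {R : realType}.
Context {d : nat -> nat}.

Definition pid a b : 'M[R]_(d b, d a) := \matrix_(i, j) ((i : nat) == j)%:R.

Fixpoint gprod (A : forall k, 'M[R]_(d k.+1, d k)) a b : 'M[R]_(d b, d a) :=
  match b with
  | 0 => pid a 0
  | b'.+1 => if (a <= b')%N then A b' *m gprod A a b' else pid a b'.+1
  end.

Lemma pid_id a : pid a a = 1%:M.
Proof. by apply/matrixP => i j; rewrite !mxE. Qed.

Lemma gprod_aa A a : gprod A a a = 1%:M.
Proof. by case: a => [|a] /=; rewrite ?ltnn pid_id. Qed.

Lemma gprodS A a b : (a <= b)%N -> gprod A a b.+1 = A b *m gprod A a b.
Proof. by move=> /= ->. Qed.

Lemma mprod_g A s n : mprod A s n = gprod A s (n + s).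
Proof.
elim: n => [|n IH] /=; first by rewrite gprod_aa.
by rewrite IH leq_addl.
Qed.

Lemma gtelescope A A0 a b : (a <= b)%N ->
  gprod A a b - gprod A0 a b =
  \sum_(a <= k < b) gprod A0 k.+1 b *m ((A k - A0 k) *m gprod A a k).
Proof.
elim: b => [|b IH] Hab.
  by move: Hab; rewrite leqn0 => /eqP ->; rewrite big_geq // !gprod_aa subrr.
have [->|Hab'] := eqVneq a b.+1.
  by rewrite big_geq // !gprod_aa subrr.
have Hb : (a <= b)%N by move: Hab Hab'; rewrite leq_eqVlt => /orP [/eqP ->|]; rewrite ?eqxx.
rewrite big_nat_recr // gprod_aa mul1mx.
rewrite (eq_big_nat _ _ (F2 := fun k => A0 b *m (gprod A0 k.+1 b *m ((A k - A0 k) *m gprod A a k)))); last first.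
  by move=> k /andP [_ Hk]; rewrite gprodS // !mulmxA.
rewrite -mulmx_sumr -IH // !gprodS // mulmxBr mulmxBl.
by rewrite /= addrC addrA addrNK.
Qed.
End GP.


Section Main.
Set Implicit Arguments.
Variable R : realType.
Variable d : nat -> nat.
Variables A A0 : forall k, 'M[R]_(d k.+1, d k).
Variable L : nat.
Variables M0 dl e1 : R.
Hypothesis M01 : 1 <= M0.
Hypothesis dl0 : 0 <= dl.
Hypothesis e10 : 0 <= e1.
Hypothesis HQ : forall a b, (a <= b <= L)%N -> specnorm (gprod A0 a b) <= M0.
Hypothesis HQs : forall a b, (a < b <= L)%N -> (L <= 10 * (b - a - 1))%N ->
  specnorm (gprod A0 a b) <= e1.
Hypothesis HE : forall k, (k < L)%N -> specnorm (A k - A0 k) <= dl.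
Hypothesis Hsmall : L%:R * M0 * dl * 2 <= 1.

Lemma M00 : 0 <= M0. Proof. exact: le_trans M01. Qed.

Lemma tel_bound a b : (a <= b <= L)%N ->
  specnorm (gprod A a b) <= specnorm (gprod A0 a b) +
   \sum_(a <= k < b) specnorm (gprod A0 k.+1 b) * dl * specnorm (gprod A a k).
Proof.
move=> /andP [ab bL].
apply: le_trans (sn_sub _ (gprod A0 a b)) _; rewrite lerD2l gtelescope.
apply: le_trans (sn_sum _ _) _; apply: ler_sum_nat => k /andP [ak kb].
apply: le_trans (sn_mul _ _) _; rewrite -mulrA ler_wpM2l ?sn_ge0 //.
apply: le_trans (sn_mul _ _) _; rewrite ler_wpM2r ?sn_ge0 // HE //.
  exact: leq_trans kb bL.
exact: ab.
Qed.

Lemma sum_le a b (F : nat -> R) c : (a <= b <= L)%N ->  0 <= c ->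
  (forall k, (a <= k < b)%N -> F k <= c) -> \sum_(a <= k < b) F k <= L%:R * c.
Proof.
move=> /andP [ab bL] c0 H; apply: le_trans (ler_sum_nat H) _.
rewrite sumr_const_nat -[c *+ _]mulr_natl ler_wpM2r // ler_nat; lia.
Qed.

Lemma bound1 a b : (a <= b <= L)%N -> specnorm (gprod A a b) <= 2 * M0.
Proof.
move: b; elim/ltn_ind => b IH Hb.
apply: le_trans (tel_bound _ _ Hb) _.
have : \sum_(a <= k < b) specnorm (gprod A0 k.+1 b) * dl * specnorm (gprod A a k)
   <= L%:R * (M0 * dl * (2 * M0)).
  apply: sum_le => //; first by rewrite !mulr_ge0 ?M00.
  move=> k /andP [ak kb]; apply: ler_pM; rewrite ?mulr_ge0 ?sn_ge0 //.
    by rewrite ler_wpM2r // HQ //; apply/andP; split => //; case/andP: Hb => _ H; lia.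
  by apply: IH => //; apply/andP; split => //; case/andP: Hb => _ H; lia.
have := HQ _ _ Hb; have := ler_wpM2r M00 Hsmall; rewrite mul1r; lra.
Qed.

Lemma bound2 a b : (a < b <= L)%N -> (L <= 10 * (b - a - 1))%N ->
  specnorm (gprod A a b) <= e1 + L%:R * (M0 * dl * (2 * M0)).
Proof.
move=> Hb Hl.
have Hb' : (a <= b <= L)%N by case/andP: Hb => H1 H2; apply/andP; split; lia.
apply: le_trans (tel_bound _ _ Hb') _; apply: lerD; first exact: HQs.
apply: sum_le => //; first by rewrite !mulr_ge0 ?M00.
move=> k /andP [ak kb]; apply: ler_pM; rewrite ?mulr_ge0 ?sn_ge0 //.
  by rewrite ler_wpM2r // HQ //; apply/andP; split => //; case/andP: Hb => _ H; lia.
by apply: bound1; apply/andP; split => //; case/andP: Hb => _ H; lia.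
Qed.

Hypothesis L40 : (40 <= L)%N.

Lemma bound3 a b : (a < b <= L)%N -> (L <= 4 * (b - a - 1))%N ->
  specnorm (gprod A a b) <= e1 + L%:R * (e1 * dl * (2 * M0) +
      M0 * dl * (e1 + L%:R * (M0 * dl * (2 * M0)))).
Proof.
move=> Hb Hl.
have Hb' : (a <= b <= L)%N by case/andP: Hb => H1 H2; apply/andP; split; lia.
apply: le_trans (tel_bound _ _ Hb') _; apply: lerD; first by apply: HQs => //; lia.
have X0 : 0 <= e1 + L%:R * (M0 * dl * (2 * M0)) by rewrite addr_ge0 // !mulr_ge0 ?M00.
apply: sum_le => //; first by rewrite addr_ge0 // !mulr_ge0 ?M00.
move=> k /andP [ak kb].
have [C1|C1] := boolP ((k.+1 < b)%N && (L <= 10 * (b - k.+1 - 1))%N).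
  have T : specnorm (gprod A0 k.+1 b) * dl * specnorm (gprod A a k) <= e1 * dl * (2 * M0).
    apply: ler_pM; rewrite ?mulr_ge0 ?sn_ge0 //.
      have HQ1 : specnorm (gprod A0 k.+1 b) <= e1.
        by case/andP: C1 => H1 H2; apply: HQs => //; case/andP: Hb => _ H; apply/andP; split.
      by apply: ler_wpM2r.
    by apply: bound1; apply/andP; split => //; case/andP: Hb => _ H; lia.
  apply: le_trans T _; rewrite lerDl !mulr_ge0 ?M00 //.
have C2 : (a < k)%N && (L <= 10 * (k - a - 1))%N.
  move: C1; case/andP: Hb => H1 H2; apply: contraNT; rewrite negb_and -!ltnNge => H; apply/andP.
  case/orP: H => H; lia.
have T : specnorm (gprod A0 k.+1 b) * dl * specnorm (gprod A a k) <=
   M0 * dl * (e1 + L%:R * (M0 * dl * (2 * M0))).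
  apply: ler_pM; rewrite ?mulr_ge0 ?sn_ge0 ?M00 //.
    by rewrite ler_wpM2r // HQ //; apply/andP; split => //; case/andP: Hb => _ H; lia.
  by case/andP: C2 => H1 H2; apply: bound2 => //; apply/andP; split => //; case/andP: Hb => _ H; lia.
apply: le_trans T _; rewrite lerDr !mulr_ge0 ?M00 //.
Qed.
End Main.


Lemma growth (R : realType) (p : nat) (g a C : R) : 0 < g -> 0 < a -> 0 <= C ->
  exists L0 : R, 40 <= L0 /\ forall x : R, L0 <= x -> C * x ^+ p <= expR (a * powR x g).
Proof.
move=> g0 a0 C0.
set m := Num.Def.archi_bound (p%:R / g).
have Hm : p%:R <= m%:R * g.
  have := archi_boundP (x := p%:R / g); rewrite divr_ge0 ?(ltW g0) // => /(_ isT) H.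
  by rewrite -ler_pdivrMr // ltW.
set F : R := (m.+1)`!%:R.
have F0 : 0 < F by rewrite ltr0n fact_gt0.
set P := a ^+ m.+1.
have P0 : 0 < P by rewrite exprn_gt0.
set y0 := C * F / P + 1.
have y00 : 0 < y0.
  have : 0 <= C * F / P by apply: divr_ge0; [apply: mulr_ge0 => //; exact: ltW | exact: ltW].
  rewrite /y0; lra.
exists (40 + powR y0 g^-1); split; first by rewrite lerDl powR_ge0.
move=> x Hx.
have x1 : 1 <= x by apply: le_trans Hx; have := powR_ge0 y0 g^-1; lra.
have x0 : 0 <= x by lra.
set y := powR x g.
have yy0 : y0 <= y.
  have := @ge0_ler_powR R g (ltW g0) (powR y0 g^-1) x.
  rewrite !nnegrE powR_ge0 x0 -powRrM mulVf ?gt_eqF // powRr1 ?(ltW y00) //.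
  by apply => //; have := powR_ge0 y0 g^-1; lra.
have y_0 : 0 <= y by rewrite /y powR_ge0.
have H1 : x ^+ p <= y ^+ m.
  rewrite -powR_mulrn // -powR_mulrn // /y -powRrM.
  apply: ler_powR => //; by rewrite mulrC.
have H2 : (a * y) ^+ m.+1 / F <= expR (a * y).
  have := @expR_ge1Dxn R (a * y) m (mulr_ge0 (ltW a0) y_0).
  rewrite -/F; lra.
have Ym : 0 <= y ^+ m by rewrite exprn_ge0.
have CF : C * F <= P * y.
  have : C * F / P <= y by move: yy0; rewrite /y0; lra.
  by rewrite ler_pdivrMr // [y * P]mulrC.
apply: le_trans H2.
have -> : (a * y) ^+ m.+1 / F = (P * y) * y ^+ m / F by rewrite /P exprMn [y ^+ m.+1]exprS mulrA.
rewrite ler_pdivlMr //.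
apply: (@le_trans _ _ (C * y ^+ m * F)).
  by rewrite ler_wpM2r ?(ltW F0) // ler_wpM2l.
have -> : C * y ^+ m * F = (C * F) * y ^+ m by ring.
by rewrite ler_wpM2r.
Qed.


Lemma natdiv_le (R : realType) (L x c : nat) : (0 < c)%N ->
  ((L%:R : R) / c%:R <= x%:R) = (L <= c * x)%N.
Proof. by move=> c0; rewrite ler_pdivrMr ?ltr0n // -natrM ler_nat mulnC. Qed.

Lemma pow_mono (R : realType) (x : R) (m n : nat) : 1 <= x -> (m <= n)%N -> x ^+ m <= x ^+ n.
Proof.
move=> x1 mn; rewrite -(subnK mn) exprD ler_peMl ?exprn_ge0 ?exprn_ege1 //.
exact: le_trans x1.
Qed.

Lemma nat1 a b : (a < b)%N -> ((b - a.+1).+1 + a.+1.-1 = b)%N.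
Proof. lia. Qed.
Lemma nat2 i j : (1 <= i)%N -> (i <= j)%N -> ((j - i).+1 + i.-1 = j)%N.
Proof. lia. Qed.
Lemma nat3 a b L : (L <= 10 * (b - a - 1))%N -> (L <= 10 * (b - a.+1))%N.
Proof. lia. Qed.
Lemma nat4 i j L : (1 <= i)%N -> (i <= j)%N -> (j <= L)%N -> (i.-1 <= j <= L)%N.
Proof. move=> *; apply/andP; split; lia. Qed.
Lemma nat5 i j L : (1 <= i)%N -> (i <= j)%N -> (j <= L)%N -> (i.-1 < j <= L)%N.
Proof. move=> *; apply/andP; split; lia. Qed.
Lemma nat6 i j L : (1 <= i)%N -> (L <= 4 * (j - i))%N -> (L <= 4 * (j - i.-1 - 1))%N.
Proof. lia. Qed.
Lemma nat7 a b : (a <= b)%N -> a != b -> (a.+1 <= b)%N.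
Proof. move=> H /eqP; lia. Qed.

Lemma mprod_sn (R : realType) d (A : forall k, 'M[R]_(d k.+1, d k)) s n b :
  (n + s)%N = b -> specnorm (mprod A s n) = specnorm (gprod A s b).
Proof. by move=> <-; rewrite mprod_g. Qed.

Theorem lemma5p3 (R : realType) (gamma c1 K : R) :
  0 < gamma -> gamma <= 1 -> 0 < c1 -> 1 <= K ->
  exists L0 K' : R,
  forall (L : nat), L0 <= L%:R ->
  forall (d : nat -> nat)
         (A0 A : forall k : nat, 'M[R]_(d k.+1, d k)),
  (forall k, (k <= L)%N -> (0 < d k)%N) ->
  (forall i j, (1 <= i)%N -> (i <= j)%N -> (j <= L)%N ->
     specnorm (mprod A0 i.-1 (j - i).+1) <= K * L%:R ^+ 3) ->
  (forall i j, (1 <= i)%N -> (i <= j)%N -> (j <= L)%N ->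
     ((j - i)%N%:R : R) >= L%:R / 10 ->
     specnorm (mprod A0 i.-1 (j - i).+1) <= expR (- (c1 * powR L%:R gamma))) ->
  (forall k, (k < L)%N ->
     specnorm (A k - A0 k) <= expR (- (3/5 * c1 * powR L%:R gamma))) ->
  (forall i j, (1 <= i)%N -> (i <= j)%N -> (j <= L)%N ->
     specnorm (mprod A i.-1 (j - i).+1) <= K' * L%:R ^+ 3) /\
  (forall i j, (1 <= i)%N -> (i <= j)%N -> (j <= L)%N ->
     ((j - i)%N%:R : R) >= L%:R / 4 ->
     specnorm (mprod A i.-1 (j - i).+1) <= K' * expR (- (c1 * powR L%:R gamma))).
Proof.
move=> g0 g1 c10 K1.
have K0 : 0 <= K by apply: le_trans K1.
have [L0 [L040 HL0]] := @growth R 12 gamma (c1 / 5) (4 * K ^+ 3) g0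
  ltac:(by rewrite divr_gt0) ltac:(by rewrite mulr_ge0 ?exprn_ge0).
exists L0, (4 * K) => L HL d A0 A _ HQ HQs HE.
set Lr : R := L%:R.
have L40 : (40 <= L)%N by rewrite -(ler_nat R); apply: le_trans HL.
have Lr1 : 1 <= Lr by rewrite /Lr ler1n; lia.
have Lr0 : 0 <= Lr by apply: le_trans Lr1.
set y := powR Lr gamma.
have y0 : 0 <= y by exact: powR_ge0.
set M0 := K * Lr ^+ 3.
set dl := expR (- (3/5 * c1 * y)).
set e1 := expR (- (c1 * y)).
set Z := expR (- (c1 / 5 * y)).
have dl0 : 0 <= dl by exact: expR_ge0.
have e10 : 0 <= e1 by exact: expR_ge0.
have Z0 : 0 <= Z by exact: expR_ge0.
have dlZ : dl <= Z by rewrite ler_expR; have := mulr_ge0 (ltW c10) y0; lra.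
have dl2 : dl * dl = e1 * Z by rewrite -!expRD; congr expR; field.
set V := K ^+ 3 * Lr ^+ 12.
have HV : 4 * V * Z <= 1.
  have := HL0 Lr HL; rewrite -/y /Z expRN => H.
  by rewrite ler_pdivrMr ?expR_gt0 // mul1r /V mulrA.
have M01 : 1 <= M0 by rewrite /M0 -[1]mul1r ler_pM // exprn_ege1.
set W := Lr * M0.
have W1 : 1 <= W by rewrite /W -[1]mul1r ler_pM.
have WV : W <= V.
  rewrite /W /M0 /V; have -> : Lr * (K * Lr ^+ 3) = K * Lr ^+ 4 by ring.
  apply: ler_pM; rewrite ?exprn_ge0 //.
    by rewrite -{1}(expr1 K) pow_mono.
  exact: pow_mono.
have W2M : W * W * M0 <= V.
  rewrite /W /M0 /V.
  have -> : Lr * (K * Lr ^+ 3) * (Lr * (K * Lr ^+ 3)) * (K * Lr ^+ 3) = K ^+ 3 * Lr ^+ 11.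
    by ring.
  by rewrite ler_wpM2l ?exprn_ge0 // pow_mono.
have WdZ : W * dl <= 1 / 4.
  apply: (@le_trans _ _ (V * Z)); last by lra.
  apply: ler_pM => //; apply: le_trans W1.
  by [].
have Hsmall : Lr * M0 * dl * 2 <= 1 by rewrite -/W; lra.
have HQ' : forall a b, (a <= b <= L)%N -> specnorm (gprod A0 a b) <= M0.
  move=> a b /andP [ab bL].
  have [<-|ab'] := eqVneq a b; first by rewrite gprod_aa; exact: le_trans (sn_id _) M01.
  have := HQ a.+1 b isT (@nat7 a b ab ab') bL.
  by rewrite (@mprod_sn _ _ _ _ _ _ (@nat1 a b (@nat7 a b ab ab'))).
have HQs' : forall a b, (a < b <= L)%N -> (L <= 10 * (b - a - 1))%N ->
    specnorm (gprod A0 a b) <= e1.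
  move=> a b /andP [ab bL] H.
  have := HQs a.+1 b isT ab bL; rewrite natdiv_le // (@mprod_sn _ _ _ _ _ _ (@nat1 a b ab)).
  by apply; apply: nat3.
split.
  move=> i j i1 ij jL; rewrite (@mprod_sn _ _ _ _ _ _ (@nat2 i j i1 ij)).
  apply: le_trans (bound1 _ _ _ _ _ _ _ _ M01 dl0 e10 HQ' HE Hsmall _ _ (@nat4 i j L i1 ij jL)) _.
  by rewrite /M0 mulrA ler_wpM2r ?exprn_ge0 // ler_wpM2r //; lra.
move=> i j i1 ij jL; rewrite natdiv_le // => Hl; rewrite (@mprod_sn _ _ _ _ _ _ (@nat2 i j i1 ij)).
apply: le_trans (bound3 _ _ _ _ _ _ _ _ M01 dl0 e10 HQ' HQs' HE Hsmall L40 _ _ (@nat5 i j L i1 ij jL) (@nat6 i j L i1 Hl)) _.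
rewrite -/Lr.
have -> : e1 + Lr * (e1 * dl * (2 * M0) + M0 * dl * (e1 + Lr * (M0 * dl * (2 * M0))))
   = e1 + 3 * e1 * (W * dl) + 2 * (W * W * M0) * (dl * dl) by rewrite /W; ring.
rewrite dl2.
have h1 : e1 * (W * dl) <= e1 * (1/4) by rewrite ler_wpM2l.
have h2 : (W * W * M0) * (e1 * Z) <= V * (e1 * Z) by rewrite ler_wpM2r ?mulr_ge0.
have h3 : V * (e1 * Z) <= e1 * (1/4).
  have -> : V * (e1 * Z) = e1 * (V * Z) by ring.
  rewrite ler_wpM2l //; lra.
have h4 : e1 <= K * e1 by rewrite ler_peMl.
lra.
Qed.
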